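(* Let $G=K_{n_1}\times\cdots\times K_{n_d}$, where each $n_j\geq 2$ is even. Then for every vertex $u$ of $G$, $\uparrow^{2}G$ has Laplacian perfect state transfer between $(0,u)$ and $(1,u)$.
   Context: All graphs are simple, undirected and unweighted. $K_n$ is the complete graph on $n$ vertices. The direct product $G\times H$ is the graph with adjacency matrix $A(G)\otimes A(H)$. The blow-up $\uparrow^{2}G$ has vertex set $\mathbb{Z}_2\times V(G)$, with $(l,u)\sim(m,v)$ iff $u\sim v$ in $G$. A graph with Laplacian $L=D-A$ has Laplacian perfect state transfer between $a,b$ if $\exp(i\tau L)\mathbf{e}_a=\gamma\mathbf{e}_b$ for some $\tau>0$, $\gamma\in\mathbb{C}$. *)

(* Defs.v *)
From mathcomp Require Import all_boot all_order all_algebra.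
From mathcomp Require Import all_classical all_reals all_analysis.
From mathcomp Require Import complex.
Import GRing.Theory Num.Theory numFieldNormedType.Exports.
Set Implicit Arguments. Unset Strict Implicit. Unset Printing Implicit Defensive.
Local Open Scope ring_scope.

(* Matrix exponential of a complex matrix M (over C = R[i]):
   exp(M) = sum_{k>=0} M^k / k!, taken entrywise as the limit of the partial
   sums (limits of real and imaginary parts separately, i.e. the limit in C). *)
Definition cexpmx (R : realType) (m : nat) (M : 'M[R[i]]_m) : 'M[R[i]]_m :=
  let S := fun N : nat => \sum_(k < N) ((k`!)%:R)^-1 *: M ^+ k in
  \matrix_(a, b) Complex (limn (fun N => complex.Re (S N a b)))
                         (limn (fun N => complex.Im (S N a b))).

(* A graph on a finite vertex type T is given by its adjacency relation e;
   matrices are indexed by 'I_#|T| via enum_val / enum_rank. *)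
Definition laplacian (R : pzRingType) (T : finType) (e : rel T) : 'M[R]_#|T| :=
  \matrix_(a, b)
    ((a == b)%:R * (#|[pred y | e (enum_val a) y]|)%:R
     - (e (enum_val a) (enum_val b))%:R).

Definition evec (R : pzRingType) (T : finType) (a : T) : 'cV[R]_#|T| :=
  delta_mx (enum_rank a) 0.

Definition lap_pst (R : realType) (T : finType) (e : rel T) (a b : T) : Prop :=
  exists tau : R, 0 < tau /\
    exists gamma : R[i],
      cexpmx (Complex 0 tau *: laplacian R[i] e) *m evec R[i] a
      = gamma *: evec R[i] b.

Notation prodK_vertex n := {dffun forall j, 'I_(n j)}.

(* Direct product of complete graphs: x ~ y iff x_j ~ y_j in K_{n_j} for all j,
   i.e. x_j != y_j for every coordinate j. *)
Definition prodK_adj (d : nat) (n : 'I_d -> nat) : rel (prodK_vertex n) :=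
  fun x y => [forall j, x j != y j].

Definition blowup2 (T : finType) (e : rel T) : rel ('I_2 * T) :=
  fun p q => e p.2 q.2.

(* Main.v *)
Require Import Defs.
From mathcomp Require Import all_boot all_order all_algebra.
From mathcomp Require Import all_classical all_reals all_analysis.
From mathcomp Require Import complex.
From mathcomp Require Import ring lra.
Import GRing.Theory Num.Theory numFieldNormedType.Exports.
Set Implicit Arguments. Unset Strict Implicit. Unset Printing Implicit Defensive.
Local Open Scope ring_scope.
Local Open Scope classical_set_scope.

Lemma big_option_sum (R : nmodType) (T : finType) (F : option T -> R) :
  \sum_(o : option T) F o = F None + \sum_(t : T) F (Some t).
Proof.
by rewrite ![index_enum _]unlock [@Finite.enum in LHS]unlock/= big_cons big_map.
Qed.

Section Distr.
Variables (R : comPzRingType) (I : finType) (T_ : I -> finType).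
Lemma big_dffun_distr (F : forall i, T_ i -> R) :
  \prod_(i : I) \sum_(t : T_ i) F i t =
  \sum_(y : {dffun forall i, T_ i}) \prod_(i : I) F i (y i).
Proof.
pose P_ i := [ffun t : T_ i => F i t].
have H := @big_fprod R 0 1 *%R +%R I T_ P_.
rewrite -(bigA_distr_big_dep (tagged_with T_) (fun i => untag 0 (P_ i))) in H.
have E : \prod_(i : I) \sum_(t : T_ i) F i t = \prod_(i : I) \sum_(t : T_ i) P_ i t.
  by apply: eq_bigr => i _; apply: eq_bigr => t _; rewrite ffunE.
rewrite E.
under eq_bigr => i _ do rewrite (big_tag (fun i => (P_ i : T_ i -> R)) i).
rewrite -H.
rewrite (reindex (@fprod_of_dffun I T_)); last first.
  by exists (@dffun_of_fprod I T_) => x _; [rewrite fprod_of_dffunK|rewrite dffun_of_fprodK].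
apply: eq_bigr => y _; apply: eq_bigr => i _.
by rewrite ffunE /fprod_of_dffun fprodE.
Qed.
End Distr.

Lemma intr_natC (R : pzRingType) (m : nat) : ((m%:Z)%:~R : R) = m%:R.
Proof. by []. Qed.

Section Gen.
Variable C : numFieldType.

Lemma sum_neq k (y : 'I_k) (g : 'I_k -> C) :
  \sum_t (y != t)%:R * g t = \sum_t g t - g y.
Proof.
rewrite (bigD1 y) //= [in RHS](bigD1 y) //= eqxx mul0r add0r addrAC subrr add0r.
by apply: eq_bigr => t; rewrite eq_sym => ->; rewrite mul1r.
Qed.

Lemma sum_delta k (c : 'I_k) : \sum_t ((t == c)%:R : C) = 1.
Proof. by rewrite (bigD1 c) //= eqxx big1 ?addr0 // => t /negbTE ->. Qed.

Lemma prod_bool (I : finType) (P : pred I) :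
  \prod_i ((P i)%:R : C) = [forall i, P i]%:R.
Proof.
case: (boolP [forall i, P i]) => H.
  by rewrite big1 // => i _; move/forallP: H => ->.
move/forallPn: H => [i /negbTE Pi].
by rewrite (bigD1 i) //= Pi mul0r.
Qed.

Lemma card_sumR (T : finType) (P : pred T) : (#|[pred y | P y]|%:R : C) = \sum_w (P w)%:R.
Proof.
rewrite -sum1_card natr_sum big_mkcond; apply: eq_bigr => w _.
by rewrite inE; case: (P w).
Qed.

Lemma lap_col (T : finType) (e : rel T) (f : T -> C) :
  laplacian C e *m (\col_a f (enum_val a)) =
  \col_a ((\sum_w (e (enum_val a) w)%:R) * f (enum_val a)
          - \sum_w (e (enum_val a) w)%:R * f w).
Proof.
apply/matrixP => a j; rewrite !mxE.
under eq_bigr => c _ do rewrite !mxE mulrBl.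
rewrite sumrB -card_sumR; congr (_ - _).
  rewrite (bigD1 a) //= eqxx mul1r big1 ?addr0 // => c /negbTE; rewrite eq_sym => ->.
  by rewrite !mul0r.
rewrite (reindex (@enum_rank T)); last by apply: onW_bij; exact: enum_rank_bij.
by apply: eq_bigr => w _; rewrite enum_rankK.
Qed.

Lemma delta_col (T : finType) (w : T) :
  delta_mx (enum_rank w) 0 = \col_a ((enum_val a == w)%:R : C).
Proof.
apply/matrixP => a j; rewrite !mxE ord1 eqxx andbT.
congr (_ %:R); by rewrite -(inj_eq (bij_inj (@enum_val_bij T))) enum_rankK.
Qed.
End Gen.

Section Prod.
Variables (C : numFieldType) (d : nat) (n : 'I_d -> nat) (u : prodK_vertex n).
Hypothesis npos : forall j, (0 < n j)%N.
Local Notation V := (prodK_vertex n).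

Lemma adjC (x y : V) : ((prodK_adj x y)%:R : C) = \prod_j ((x j != y j)%:R).
Proof. by rewrite prod_bool. Qed.

Lemma adj_sum (y : V) (h : forall j, 'I_(n j) -> C) :
  \sum_z (prodK_adj y z)%:R * \prod_j h j (z j) =
  \prod_j \sum_t (y j != t)%:R * h j t.
Proof.
rewrite big_dffun_distr; apply: eq_bigr => z _.
by rewrite adjC -big_split.
Qed.

Definition gS (b : bool) j (t : 'I_(n j)) : C :=
  if b then (n j)%:R^-1 else (t == u j)%:R - (n j)%:R^-1.
Definition phi (S : {ffun 'I_d -> bool}) (x : V) : C := \prod_j gS (S j) (x j).
Definition cf (b : bool) j : int := if b then (n j)%:Z - 1 else -1.
Definition mu (S : {ffun 'I_d -> bool}) : int := \prod_j cf (S j) j.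

Lemma nj_neq0 j : ((n j)%:R : C) != 0.
Proof. by rewrite pnatr_eq0 -lt0n npos. Qed.

Lemma sum_cst j (c : C) : \sum_(t : 'I_(n j)) c = (n j)%:R * c.
Proof. by rewrite sumr_const card_ord mulr_natl. Qed.

Lemma eig_g b j (y : 'I_(n j)) :
  \sum_t (y != t)%:R * gS b t = (cf b j)%:~R * gS b y.
Proof.
rewrite sum_neq /gS /cf; case: b.
  rewrite sum_cst intrB /= (intr_natC _ (n j)) (intr_natC _ 1).
  have := nj_neq0 j; move: ((n j)%:R : C) => N NZ.
  by field.
rewrite sumrB sum_delta sum_cst mulfV ?nj_neq0 //.
by rewrite subrr add0r /= mulN1r.
Qed.

Lemma phi_eig S (y : V) :
  \sum_z (prodK_adj y z)%:R * phi S z = (mu S)%:~R * phi S y.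
Proof.
rewrite /phi (adj_sum y (fun j t => gS (S j) t)); under eq_bigr do rewrite eig_g.
by rewrite big_split /= rmorph_prod.
Qed.

Lemma deg_prod (y : V) :
  \sum_z ((prodK_adj y z)%:R : C) = (\prod_j ((n j)%:Z - 1))%:~R.
Proof.
have := adj_sum y (fun _ _ => 1).
rewrite (eq_bigr (fun z => ((prodK_adj y z)%:R : C))); last first.
  by move=> z _; rewrite big1 ?mulr1.
move=> ->; rewrite rmorph_prod; apply: eq_bigr => j _.
under eq_bigr do rewrite mulr1.
rewrite (eq_bigr (fun t => (y j != t)%:R * 1)); last by move=> t _; rewrite mulr1.
rewrite sum_neq sum_cst mulr1 /= intrB /=.
by rewrite (intr_natC _ (n j)) (intr_natC _ 1).
Qed.

Lemma sum_phi (x : V) : \sum_S phi S x = (x == u)%:R.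
Proof.
rewrite /phi -(bigA_distr_bigA (fun j b => gS b (x j))).
under eq_bigr do rewrite big_bool /= /gS addrCA subrr addr0.
rewrite prod_bool; congr (_ %:R).
congr nat_of_bool.
apply/idP/idP => [/forallP H|/eqP ->]; last by apply/forallP.
apply/eqP/ffunP => j; exact/eqP/H.
Qed.
End Prod.

Section Exp.
Variable R : realType.
Local Notation C := R[i].

Lemma mulC (a b c d : R) : (Complex a b : C) * Complex c d = Complex (a * c - b * d) (a * d + b * c).
Proof. by []. Qed.

Lemma powI (t : R) k : (Complex 0 t : C) ^+ k =
  Complex ((~~ odd k)%:R * (-1) ^+ k./2 * t ^+ k) ((odd k)%:R * (-1) ^+ k./2 * t ^+ k).
Proof.
elim: k => [|k IH].
  by rewrite expr0 /= !mulr1.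
rewrite (exprSr (Complex 0 t : C) k) IH mulC /= uphalf_half.
case: (odd k) => /=; rewrite ?add0n ?add1n ?exprS ?exprSr; apply/eqP; rewrite eq_complex /=;
  apply/andP; split; apply/eqP; ring.
Qed.

Lemma ReD : {morph (@complex.Re R) : x y / (x + y : C) >-> x + y}.
Proof. by case=> ? ? [] ? ?. Qed.
Lemma ImD : {morph (@complex.Im R) : x y / (x + y : C) >-> x + y}.
Proof. by case=> ? ? [] ? ?. Qed.
Lemma Re_sum (I : Type) (r : seq I) (P : pred I) (F : I -> C) :
  complex.Re (\sum_(i <- r | P i) F i) = \sum_(i <- r | P i) complex.Re (F i).
Proof. exact: (big_morph _ ReD). Qed.
Lemma Im_sum (I : Type) (r : seq I) (P : pred I) (F : I -> C) :
  complex.Im (\sum_(i <- r | P i) F i) = \sum_(i <- r | P i) complex.Im (F i).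
Proof. exact: (big_morph _ ImD). Qed.

Definition sexp (t : R) (N : nat) : C :=
  \sum_(k < N) ((k`!)%:R)^-1 * (Complex 0 t : C) ^+ k.

Lemma natC (m : nat) : (m%:R : C) = Complex (m%:R) 0.
Proof. by rewrite -(rmorph_nat (real_complex R)). Qed.

Lemma invC (x : R) : ((Complex x 0 : C)^-1) = Complex (x^-1) 0.
Proof. by rewrite !complexr0 -fmorphV. Qed.

Lemma Re_sexp t N : complex.Re (sexp t N) = series (cos_coeff t) N.
Proof.
rewrite /sexp Re_sum /series /= big_mkord; apply: eq_bigr => k _.
rewrite natC invC powI mulC /= /cos_coeff /=. rewrite -exprnP; ring.
Qed.

Lemma Im_sexp t N : complex.Im (sexp t N) = series (sin_coeff t) N.
Proof.
rewrite /sexp Im_sum /series /= big_mkord; apply: eq_bigr => k _.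
rewrite natC invC powI mulC /= /sin_coeff /=.
case: k => k _ /=.
case: k => [|k] /=; first by ring.
rewrite uphalf_half; case: (odd k) => /=; ring.
Qed.

Lemma cvg_Re_sexp t : (fun N => complex.Re (sexp t N)) @ \oo --> cos t.
Proof.
have -> : (fun N => complex.Re (sexp t N)) = series (cos_coeff t).
  by apply/funext => N; rewrite Re_sexp.
have -> : cos t = lim (series (cos_coeff t) @ \oo) by rewrite unlock.
exact: is_cvg_series_cos_coeff.
Qed.
Lemma cvg_Im_sexp t : (fun N => complex.Im (sexp t N)) @ \oo --> sin t.
Proof.
have -> : (fun N => complex.Im (sexp t N)) = series (sin_coeff t).
  by apply/funext => N; rewrite Im_sexp.
have -> : sin t = lim (series (sin_coeff t) @ \oo) by rewrite unlock.
exact: is_cvg_series_sin_coeff.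
Qed.

Lemma cvg_sumR (I : finType) (f : I -> nat -> R) (l : I -> R) :
  (forall i, f i @ \oo --> l i) -> (fun N => \sum_i f i N) @ \oo --> \sum_i l i.
Proof.
move=> H.
suff : forall r : seq I, (fun N => \sum_(i <- r) f i N) @ \oo --> \sum_(i <- r) l i.
  by apply.
elim => [|i r IH].
  under eq_fun do rewrite big_nil.
  by rewrite big_nil; exact: cvg_cst.
under eq_fun do rewrite big_cons.
rewrite big_cons; exact: cvgD.
Qed.

Lemma mul_delta_col m (A : 'M[C]_m) (b a : 'I_m) (j : 'I_1) : (A *m delta_mx b 0) a j = A a b.
Proof. by rewrite -colE mxE. Qed.

Lemma powmx_eig m (M : 'M[C]_m) (v : 'cV[C]_m) (z : C) k :
  M *m v = z *: v -> M ^+ k *m v = z ^+ k *: v.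
Proof.
move=> H; elim: k => [|k IH]; first by rewrite !expr0 mul1mx scale1r.
by rewrite exprSr -mulmxE -mulmxA H -scalemxAr IH scalerA -exprS.
Qed.

Lemma cexpmx_eig m (M : 'M[C]_m) (b : 'I_m) (I : finType) (v : I -> 'cV[C]_m) (t : I -> R) :
  (forall i, M *m v i = Complex 0 (t i) *: v i) ->
  \sum_i v i = delta_mx b 0 ->
  cexpmx M *m delta_mx b 0 = \sum_i (Complex (cos (t i)) (sin (t i)) : C) *: v i.
Proof.
move=> Hv Hs.
have HS : forall N, (\sum_(k < N) ((k`!)%:R)^-1 *: M ^+ k) *m delta_mx b 0
     = \sum_i sexp (t i) N *: v i.
  move=> N; rewrite -Hs mulmx_suml.
  under eq_bigr => k _ do rewrite mulmx_sumr.
  rewrite exchange_big /=; apply: eq_bigr => i _.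
  rewrite /sexp scaler_suml; apply: eq_bigr => k _.
  by rewrite -scalemxAl (powmx_eig _ (Hv i)) scalerA.
apply/matrixP => a j.
rewrite mul_delta_col /cexpmx mxE.
have E : forall N, (\sum_(k < N) ((k`!)%:R)^-1 *: M ^+ k) a b
    = \sum_i sexp (t i) N * v i a j.
  move=> N; rewrite -(mul_delta_col _ _ _ j) HS summxE; apply: eq_bigr => i _.
  by rewrite mxE.
rewrite summxE.
set z := \sum_i _.
have -> : z = Complex (complex.Re z) (complex.Im z) by case: z.
congr Complex.
- under eq_fun do rewrite E Re_sum.
  rewrite /z Re_sum.
  apply: cvg_lim => //.
  apply: cvg_sumR => i.
  rewrite mxE.
  have -> : complex.Re (Complex (cos (t i)) (sin (t i)) * v i a j) =
    cos (t i) * complex.Re (v i a j) - sin (t i) * complex.Im (v i a j).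
    by case: (v i a j) => ? ?.
  have -> : (fun N => complex.Re (sexp (t i) N * v i a j)) =
     (fun N => complex.Re (sexp (t i) N) * complex.Re (v i a j) -
               complex.Im (sexp (t i) N) * complex.Im (v i a j)).
    by apply/funext => N; case: (sexp _ _) => ? ?; case: (v i a j) => ? ?.
  apply: cvgB; apply: cvgMl; [exact: cvg_Re_sexp | exact: cvg_Im_sexp].
- under eq_fun do rewrite E Im_sum.
  rewrite /z Im_sum.
  apply: cvg_lim => //.
  apply: cvg_sumR => i.
  rewrite mxE.
  have -> : complex.Im (Complex (cos (t i)) (sin (t i)) * v i a j) =
    cos (t i) * complex.Im (v i a j) + sin (t i) * complex.Re (v i a j).
    by case: (v i a j) => ? ? /=; rewrite addrC.
  have -> : (fun N => complex.Im (sexp (t i) N * v i a j)) =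
     (fun N => complex.Re (sexp (t i) N) * complex.Im (v i a j) +
               complex.Im (sexp (t i) N) * complex.Re (v i a j)).
    by apply/funext => N; case: (sexp _ _) => ? ?; case: (v i a j) => ? ? /=; rewrite addrC.
  apply: cvgD; apply: cvgMl; [exact: cvg_Re_sexp | exact: cvg_Im_sexp].
Qed.
End Exp.

Section Main.
Variable R : realType.
Local Notation C := R[i].
Variables (d : nat) (n : 'I_d -> nat) (u : prodK_vertex n).
Hypothesis hn : forall j : 'I_d, (2 <= n j)%N /\ ~~ odd (n j).
Local Notation V := (prodK_vertex n).
Local Notation W := ('I_2 * V)%type.

Lemma npos j : (0 < n j)%N.
Proof. by case: (hn j) => /ltnW. Qed.

Lemma cos_natpi (m : nat) : cos (m%:R * pi) = (-1) ^+ m :> R /\ sin (m%:R * pi) = 0 :> R.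
Proof.
elim: m => [|m [IHc IHs]]; first by rewrite mul0r cos0 sin0 expr0.
by rewrite mulrSr mulrDl mul1r cosDpi sinDpi IHc IHs exprS mulN1r oppr0.
Qed.

Lemma cos_intpi (z : int) : cos (z%:~R * pi) = (-1) ^+ (absz (z)) :> R /\ sin (z%:~R * pi) = 0 :> R.
Proof.
case: z => m; first by rewrite intr_natC; exact: cos_natpi.
rewrite NegzE abszN /= intrN mulNr cosN sinN.
by have [-> ->] := cos_natpi m.+1; rewrite oppr0.
Qed.

Lemma odd_prodz (I : finType) (a : I -> int) :
  (forall i, odd (absz (a i))) -> odd (absz (\prod_i a i)).
Proof.
move=> H; rewrite (big_morph (fun z : int => (absz (z))) abszM (erefl : absz 1 = 1%N)).
by apply: (big_ind (fun m => odd m)) => // x y hx hy; rewrite oddM hx hy.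
Qed.

Definition Kz : int := \prod_j ((n j)%:Z - 1).

Lemma odd_cf b j : odd (absz (cf n b j)).
Proof.
case: b => //=; case: (hn j) => h2 hev.
rewrite subzn ?(ltnW h2) //= oddB ?(ltnW h2) //.
by move: hev; case: (odd (n j)).
Qed.

Lemma odd_Kz : odd (absz (Kz)).
Proof. apply: odd_prodz => j; exact: (odd_cf true j). Qed.

Lemma odd_mu S : odd (absz (mu n S)).
Proof. apply: odd_prodz => j; exact: odd_cf. Qed.


Local Notation e := (blowup2 (@prodK_adj d n)).
Definition vcol (T : finType) (f : T -> C) : 'cV[C]_#|T| := \col_a f (enum_val a).

Lemma max_ne0 : ((ord_max : 'I_2) == ord0) = false.
Proof. by []. Qed.

Lemma sumW (F : W -> C) :
  \sum_(w : W) F w = \sum_y F (ord0, y) + \sum_y F (ord_max, y).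
Proof.
transitivity (\sum_(p : W) F (p.1, p.2)); first by apply: eq_bigr => -[].
rewrite -(pair_bigA _ (fun l y => F (l, y))) /=.
rewrite big_ord_recl big_ord_recl big_ord0 addr0.
by have -> : lift ord0 (ord0 : 'I_1) = ord_max :> 'I_2 by apply: val_inj.
Qed.

Lemma deg_W (w : W) : \sum_(w' : W) ((e w w')%:R : C) = 2 * Kz%:~R.
Proof. by rewrite sumW /blowup2 /= !(deg_prod C) /Kz; ring. Qed.

Definition psi S : W -> C := fun w => phi C u S w.2 / 2.
Definition chi : W -> C := fun w => (if w.1 == ord0 then 1 else -1) / 2 * (w.2 == u)%:R.

Lemma Lpsi S : laplacian C e *m vcol (psi S) = ((2 * (Kz - mu n S))%:~R : C) *: vcol (psi S).
Proof.
rewrite /vcol lap_col; apply/matrixP => a j; rewrite !mxE deg_W sumW /blowup2 /psi /=.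
have H : forall y : V, \sum_z ((prodK_adj y z)%:R : C) * (phi C u S z / 2)
    = (mu n S)%:~R * phi C u S y / 2.
  move=> y; under eq_bigr do rewrite mulrA.
  by rewrite -mulr_suml (phi_eig C u npos).
rewrite !H intrM intrB (intr_natC _ 2); ring.
Qed.

Lemma Lchi : laplacian C e *m vcol chi = ((2 * Kz)%:~R : C) *: vcol chi.
Proof.
rewrite /vcol lap_col; apply/matrixP => a j; rewrite !mxE deg_W sumW /blowup2 /chi /=.
rewrite -big_split /= big1 ?subr0.
  by rewrite intrM (intr_natC _ 2).
by move=> y _; ring.
Qed.

Lemma intC (z : int) : (z%:~R : C) = Complex (z%:~R) 0.
Proof. by rewrite -(rmorph_int (real_complex R)). Qed.


Lemma I2_cases (l : 'I_2) : (l == ord_max) = ~~ (l == ord0).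
Proof. by case: l => [[|[|k]] //]. Qed.

Lemma main_pst : lap_pst R e (ord0, u) (ord_max, u).
Proof.
exists (pi / 2); split; first by rewrite divr_gt0 // pi_gt0.
exists 1.
pose v (o : option {ffun 'I_d -> bool}) :=
  match o with None => vcol chi | Some Sx => vcol (psi Sx) end.
pose t (o : option {ffun 'I_d -> bool}) : R :=
  match o with None => Kz%:~R * pi | Some Sx => (Kz - mu n Sx)%:~R * pi end.
have Hv : forall o, (Complex 0 (pi / 2) *: laplacian C e) *m v o = Complex 0 (t o) *: v o.
  case => [Sx|]; rewrite -scalemxAl /= ?Lpsi ?Lchi scalerA; congr (_ *: _);
  rewrite intC mulC /= intrM (intr_natC _ 2);
  apply/eqP; rewrite eq_complex /=; apply/andP; split; apply/eqP.
  - by ring.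
  - by field.
  - by ring.
  - by field.
have Hs : \sum_o v o = delta_mx (enum_rank ((ord0, u) : W)) 0.
  rewrite delta_col big_option_sum; apply/matrixP => a j; rewrite !mxE summxE.
  under eq_bigr do rewrite mxE.
  rewrite /chi /psi -mulr_suml (sum_phi C u).
  case: (enum_val a) => l y /=; rewrite xpair_eqE.
  by case: (l == ord0); case: (y == u) => /=; field.
rewrite /evec (cexpmx_eig Hv Hs) big_option_sum /t.
have [cK sK] := cos_intpi Kz.
rewrite -signr_odd odd_Kz expr1 in cK.
have cS : forall Sx : {ffun 'I_d -> bool}, @cos R ((Kz - mu n Sx)%:~R * pi) = 1 /\ @sin R ((Kz - mu n Sx)%:~R * pi) = 0.
  move=> Sx; have [cM sM] := cos_intpi (mu n Sx).
  rewrite -signr_odd odd_mu expr1 in cM.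
  rewrite intrB mulrBl cosB sinB cK sK cM sM; split; ring.
rewrite cK sK.
under eq_bigr => Sx _ do rewrite (proj1 (cS Sx)) (proj2 (cS Sx)).
rewrite delta_col scale1r; apply/matrixP => a j; rewrite !mxE summxE.
under eq_bigr do rewrite !mxE.
rewrite /chi /psi.
have -> : (Complex (-1) 0 : C) = -1 by apply/eqP; rewrite eq_complex /= oppr0 !eqxx.
have -> : (Complex 1 0 : C) = 1 by [].
under eq_bigr do rewrite mul1r.
rewrite -mulr_suml (sum_phi C u).
case: (enum_val a) => l y /=; rewrite xpair_eqE I2_cases.
by case: (l == ord0); case: (y == u) => /=; field.
Qed.

End Main.

Unset Implicit Arguments.
Local Close Scope classical_set_scope.

Theorem corollary7 (R : realType) (d : nat) (n : 'I_d -> nat) :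
  (0 < d)%N ->
  (forall j : 'I_d, (2 <= n j)%N /\ ~~ odd (n j)) ->
  forall u : prodK_vertex n,
    lap_pst R (blowup2 (@prodK_adj d n)) (ord0, u) (ord_max, u).
Proof. by move=> _ hn u; exact: (main_pst R u hn). Qed.
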